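(* Let $V_1,\dots,V_{15}$, $w_1,\dots,w_{15}$ and the quantum permutation matrix $u$ with diagonal blocks $u^{(i)}$ be as described in the context. Let $i\neq j$, $k,s\in V_i$ and $l,t\in V_j$. (i) If $d(k,l)=d(s,t)$, then $u^{(i)}_{ks}u^{(j)}_{lt}=0$ if and only if $\langle w_i,w_j\rangle=0$. (ii) If $d(k,l)\neq d(s,t)$, then $u^{(i)}_{ks}u^{(j)}_{lt}=0$ if and only if $\langle w_i,w_j\rangle\neq0$.
   Context: The $E_8$ root system $\Psi_{E_8}\subset\mathbb{R}^8$ consists of the 240 vectors $\pm e_i\pm e_j$ ($1\le i<j\le 8$) and all $x\in\{\pm1\}^8$ with $\prod_i x_i=1$. $G_{E_8}$ is the graph with vertices $v_x$, $x\in\Psi_{E_8}$, where $v_x=v_{-x}$, and $v_x\sim v_y$ iff $\langle x,y\rangle=0$; $d(a,b)$ is graph distance in $G_{E_8}$. Let $I=\mathrm{diag}(1,1)$, $X=\begin{pmatrix}0&1\\1&0\end{pmatrix}$, $Z=\mathrm{diag}(1,-1)$, $Y=XZ$. For $M=M_1\otimes M_2\otimes M_3$ with $M_i\in\{I,X,Y,Z\}$, $\sigma_M:v_x\mapsto v_{Mx}$ is an automorphism of $G_{E_8}$ and $L=\{\sigma_M\}\cong\mathbb{Z}_2^6$. Let $V_1,\dots,V_{15}$ be the 15 orbits of $L$ on $V(G_{E_8})$ (each of size 8). For each $i$ choose $w_i\in\Psi_{E_8}$ with $v_{w_i}\in V_i$. For $x\in\Psi_{E_8}$ let $P_x=\frac{1}{\|x\|^2}xx^*\in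 M_8(\mathbb{C})$. For $v_y,v_z\in V_i$ choose $M_{yz}=M_1\otimes M_2\otimes M_3$ ($M_k\in\{I,X,Y,Z\}$) with $M_{yz}y=\pm z$, and set $u^{(i)}_{v_yv_z}=M_{yz}P_{w_i}M_{yz}^*=P_{M_{yz}w_i}$. The matrix $u$ is block diagonal with respect to $V_1,\dots,V_{15}$ with blocks $u^{(i)}=(u^{(i)}_{v_yv_z})_{v_y,v_z\in V_i}$; it is a quantum permutation matrix with entries in $M_8(\mathbb{C})$. *)

(* Defs.v *)
From HB Require Import structures.
From mathcomp Require Import all_boot all_order all_algebra all_field.
Set Implicit Arguments.
Unset Strict Implicit.
Unset Printing Implicit Defensive.
Import Order.TTheory GRing.Theory Num.Theory.
Local Open Scope ring_scope.

(* Every root of Psi_{E8} has all its coordinates in {-1,0,1}; we encode such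
   vectors finitely, a coordinate c : 'I_3 standing for the integer c - 1. *)
Definition vec := {ffun 'I_8 -> 'I_3}.
Definition coord (c : 'I_3) : int := (nat_of_ord c)%:Z - 1.
Definition vecZ (x : vec) : 'cV[int]_8 := \col_i coord (x i).

(* x is one of  +-e_i +- e_j (i < j): exactly the coordinates i and j are
   nonzero (and they are then +-1). *)
Definition is_root_ee (x : vec) : bool :=
  [exists i : 'I_8, exists j : 'I_8,
     (i < j)%N && [forall k : 'I_8, (coord (x k) != 0) == ((k == i) || (k == j))]].
Definition is_root_pm (x : vec) : bool :=
  [forall k : 'I_8, coord (x k) != 0] && (\prod_(k < 8) coord (x k) == 1).
Definition is_root (x : vec) : bool := is_root_ee x || is_root_pm x.

(* A vertex {x,-x} is represented by its unique member whose first nonzero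
   coordinate is positive. *)
Definition is_canon (x : vec) : bool :=
  [forall k : 'I_8,
     ([forall k' : 'I_8, (k' < k)%N ==> (coord (x k') == 0)] && (coord (x k) != 0))
       ==> (coord (x k) == 1)].
Definition vertex := {x : vec | is_root x && is_canon x}.

Definition dotZ (a b : 'cV[int]_8) : int := \sum_(i < 8) a i 0 * b i 0.

Definition adj (a b : vertex) : bool := dotZ (vecZ (val a)) (vecZ (val b)) == 0.

Definition walkb (n : nat) (a b : vertex) : bool :=
  [exists p : n.-tuple vertex, path adj a p && (last a p == b)].
(* d(a,b) = the least length of a walk from a to b (a shortest walk has length
   < #|vertex|; the value #|vertex| would stand for "infinity", but G_{E8} is
   connected). *)
Definition gdist (a b : vertex) : nat :=
  find (fun n => walkb n a b) (iota 0 #|{: vertex}|).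

Definition PI : 'M[int]_2 := 1%:M.
Definition PX : 'M[int]_2 := \matrix_(i, j) (i != j)%:R.
Definition PZ : 'M[int]_2 :=
  \matrix_(i, j) (if i == j then (if i == 0 then 1 else -1) else 0).
Definition PY : 'M[int]_2 := PX *m PZ.
Definition pauli (c : 'I_4) : 'M[int]_2 :=
  match nat_of_ord c with 0 => PI | 1 => PX | 2 => PY | _ => PZ end%N.

(* Kronecker product convention: index i < 8 corresponds to (a1,a2,a3) with
   i = 4 a1 + 2 a2 + a3, a1 the index of the first tensor factor. *)
Definition bit2 (i : 'I_8) : 'I_2 := inord (i %/ 4).
Definition bit1 (i : 'I_8) : 'I_2 := inord ((i %/ 2) %% 2).
Definition bit0 (i : 'I_8) : 'I_2 := inord (i %% 2).
Definition kron3 (A B C : 'M[int]_2) : 'M[int]_8 :=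
  \matrix_(i, j) (A (bit2 i) (bit2 j) * B (bit1 i) (bit1 j) * C (bit0 i) (bit0 j)).

Definition Lelt := ('I_4 * 'I_4 * 'I_4)%type.
Definition Lmx (m : Lelt) : 'M[int]_8 :=
  kron3 (pauli m.1.1) (pauli m.1.2) (pauli m.2).

Definition Lrel (a b : 'cV[int]_8) : bool :=
  [exists m : Lelt, (Lmx m *m a == b) || (Lmx m *m a == - b)].
Definition same_orbit (k s : vertex) : bool := Lrel (vecZ (val k)) (vecZ (val s)).

Definition Proj (a : 'cV[int]_8) : 'M[algC]_8 :=
  let aC := map_mx (fun z : int => z%:~R : algC) a in
  ((dotZ a a)%:~R)^-1 *: (aC *m (map_mx (fun z : algC => z^*) aC)^T).

(* Given the choice w (w v = the chosen representative w_i of the orbit V_i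
   containing v) and the choice Mch (Mch y z = M_{yz}), the entry
   u_{v_y v_z} = P_{M_{yz} w_i} for v_y, v_z in V_i. *)
Definition uent (w : vertex -> vec) (Mch : vertex -> vertex -> Lelt)
  (k s : vertex) : 'M[algC]_8 :=
  Proj (Lmx (Mch k s) *m vecZ (w k)).

(* Main.v *)
Require Import Defs.
From HB Require Import structures.
From mathcomp Require Import all_boot all_order all_algebra all_field.
From mathcomp Require Import zify ring.
Import Order.TTheory GRing.Theory Num.Theory.
Local Open Scope ring_scope.
Set Implicit Arguments.
Unset Strict Implicit.

Definition pp (c x : nat) : nat := if (c == 1)%N || (c == 2)%N then (1 - x)%N else x.
Definition ps (c x : nat) : int :=
  if (c == 3)%N then (if (x == 0)%N then 1 else -1)
  else if (c == 2)%N then (if (x == 0)%N then -1 else 1) else 1.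
Definition pen (c a b : nat) : int := if (b == pp c a)%N then ps c a else 0.
Definition T := (nat * nat * nat)%type.
Definition pmn (m : T) (i : nat) : nat :=
  (4 * pp m.1.1 (i %/ 4) + 2 * pp m.1.2 (i %/ 2 %% 2) + pp m.2 (i %% 2))%N.
Definition sgn (m : T) (i : nat) : int :=
  ps m.1.1 (i %/ 4) * ps m.1.2 (i %/ 2 %% 2) * ps m.2 (i %% 2).
Definition xb (a : nat) : bool := (a == 1)%N || (a == 2)%N.
Definition zb (a : nat) : bool := (a == 2)%N || (a == 3)%N.
Definition ofb (x z : bool) : nat := if x then (if z then 2 else 1) else (if z then 3 else 0).
Definition pmul (a b : nat) : nat := ofb (xb a (+) xb b) (zb a (+) zb b).
Definition lmul (m n : T) : T := (pmul m.1.1 n.1.1, pmul m.1.2 n.1.2, pmul m.2 n.2).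
Definition eps (m n : T) : int := sgn m 0 * sgn n (pmn m 0) * sgn (lmul m n) 0.
Definition e0 : T := (0, 0, 0)%N.
Definition I4 := iota 0 4.
Definition I8 := iota 0 8.
Definition T64 : seq T := flatten [seq flatten [seq [seq (a, b, c) | c <- I4] | b <- I4] | a <- I4].
Definition lin (c m : T) : bool :=
  ((xb c.1.1 && xb m.1.1) (+) (zb c.1.1 && zb m.1.1)) (+)
  ((xb c.1.2 && xb m.1.2) (+) (zb c.1.2 && zb m.1.2)) (+)
  ((xb c.2 && xb m.2) (+) (zb c.2 && zb m.2)).

Definition Lfn (m : T) (v : nat -> int) (i : nat) : int := sgn m i * v (pmn m i).
Definition dotl (s t : seq int) : int := foldr (fun p acc => p.1 * p.2 + acc) 0 (zip s t).
Definition dotc (a b : nat -> int) : int := dotl (map a I8) (map b I8).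
Definition vl (l : seq nat) (i : nat) : int := (nth 0%N l i)%:Z - 1.
Definition Bc a b := dotc a b == 0.

Fixpoint gen (n : nat) : seq (seq nat) :=
  if n is n'.+1 then flatten [seq [seq c :: l | l <- gen n'] | c <- [:: 0; 1; 2]%N] else [:: [::]].

Definition rootc_ee (l : seq nat) : bool :=
  has (fun i => has (fun j => (i < j)%N && all (fun k => (vl l k != 0) == ((k == i) || (k == j))) I8) I8) I8.
Definition rootc_pm (l : seq nat) : bool :=
  all (fun k => vl l k != 0) I8 && (foldr (fun k acc => vl l k * acc) 1 I8 == 1).
Definition canonc (l : seq nat) : bool :=
  all (fun k => (all (fun k' => (k' < k)%N ==> (vl l k' == 0)) I8 && (vl l k != 0)) ==> (vl l k == 1)) I8.
Definition Rl := [seq l <- gen 8 | (rootc_ee l || rootc_pm l) && canonc l].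

Definition K0 := all (fun a => all (fun b => all (fun c => all (fun i => all (fun j =>
   pen a (i %/ 4) (j %/ 4) * pen b (i %/ 2 %% 2) (j %/ 2 %% 2) * pen c (i %% 2) (j %% 2)
   == if (j == pmn (a, b, c) i)%N then sgn (a, b, c) i else 0) I8) I8) I4) I4) I4.
Definition K1 := all (fun m => all (fun n => all (fun i =>
   [&& (pmn n (pmn m i) == pmn (lmul m n) i)%N,
       sgn m i * sgn n (pmn m i) == eps m n * sgn (lmul m n) i,
       eps m n * eps m n == 1, (pmn m i < 8)%N & sgn m i * sgn m i == 1]) I8) T64) T64.
Definition valid (m : T) : bool := [&& (m.1.1 < 4)%N, (m.1.2 < 4)%N & (m.2 < 4)%N].
Definition RP := [seq (l, map (vl l) I8) | l <- Rl].
Definition Dat : seq ((T * T * T) * seq T) := [::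
  ((0,0,3)%N, (0,1,0)%N, (1,0,0)%N, [:: (0,0,0)%N; (1,0,0)%N; (0,1,0)%N; (1,1,0)%N; (0,0,2)%N; (1,0,2)%N; (0,1,2)%N; (1,1,2)%N]);
  ((0,0,3)%N, (0,1,0)%N, (1,0,0)%N, [:: (0,0,0)%N; (1,0,0)%N; (0,1,0)%N; (1,1,0)%N; (0,0,2)%N; (1,0,2)%N; (0,1,2)%N; (1,1,2)%N]);
  ((0,1,1)%N, (0,2,2)%N, (1,0,0)%N, [:: (0,0,0)%N; (1,0,0)%N; (0,0,3)%N; (1,0,3)%N; (0,0,2)%N; (1,0,2)%N; (0,0,1)%N; (1,0,1)%N]);
  ((0,0,1)%N, (0,3,0)%N, (1,0,0)%N, [:: (0,0,0)%N; (1,0,0)%N; (0,2,0)%N; (1,2,0)%N; (0,0,1)%N; (1,0,1)%N; (0,2,1)%N; (1,2,1)%N]);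
  ((0,0,1)%N, (0,3,0)%N, (1,0,0)%N, [:: (0,0,0)%N; (1,0,0)%N; (0,2,0)%N; (1,2,0)%N; (0,0,1)%N; (1,0,1)%N; (0,2,1)%N; (1,2,1)%N]);
  ((0,1,1)%N, (0,2,2)%N, (1,0,0)%N, [:: (0,0,0)%N; (1,0,0)%N; (0,0,3)%N; (1,0,3)%N; (0,0,2)%N; (1,0,2)%N; (0,0,1)%N; (1,0,1)%N]);
  ((0,0,3)%N, (0,1,0)%N, (1,0,0)%N, [:: (0,0,0)%N; (1,0,0)%N; (0,1,0)%N; (1,1,0)%N; (0,0,2)%N; (1,0,2)%N; (0,1,2)%N; (1,1,2)%N]);
  ((0,0,1)%N, (0,3,0)%N, (1,0,0)%N, [:: (0,0,0)%N; (1,0,0)%N; (0,2,0)%N; (1,2,0)%N; (0,0,1)%N; (1,0,1)%N; (0,2,1)%N; (1,2,1)%N]);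
  ((0,1,1)%N, (0,2,2)%N, (1,0,0)%N, [:: (0,0,0)%N; (1,0,0)%N; (0,0,3)%N; (1,0,3)%N; (0,0,2)%N; (1,0,2)%N; (0,0,1)%N; (1,0,1)%N]);
  ((0,1,1)%N, (0,2,2)%N, (1,0,0)%N, [:: (0,0,0)%N; (1,0,0)%N; (0,0,3)%N; (1,0,3)%N; (0,0,2)%N; (1,0,2)%N; (0,0,1)%N; (1,0,1)%N]);
  ((0,0,1)%N, (0,3,0)%N, (1,0,0)%N, [:: (0,0,0)%N; (1,0,0)%N; (0,2,0)%N; (1,2,0)%N; (0,0,1)%N; (1,0,1)%N; (0,2,1)%N; (1,2,1)%N]);
  ((0,0,3)%N, (0,1,0)%N, (1,0,0)%N, [:: (0,0,0)%N; (1,0,0)%N; (0,1,0)%N; (1,1,0)%N; (0,0,2)%N; (1,0,2)%N; (0,1,2)%N; (1,1,2)%N]);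
  ((0,1,1)%N, (1,0,1)%N, (2,2,3)%N, [:: (0,0,0)%N; (0,0,3)%N; (0,1,2)%N; (0,1,1)%N; (0,1,3)%N; (0,1,0)%N; (0,0,1)%N; (0,0,2)%N]);
  ((0,0,1)%N, (1,1,0)%N, (2,2,0)%N, [:: (0,0,0)%N; (0,3,0)%N; (0,2,0)%N; (0,1,0)%N; (0,0,1)%N; (0,3,1)%N; (0,2,1)%N; (0,1,1)%N]);
  ((0,1,0)%N, (1,0,1)%N, (2,0,2)%N, [:: (0,0,0)%N; (0,0,3)%N; (0,0,2)%N; (0,0,1)%N; (0,1,0)%N; (0,1,3)%N; (0,1,2)%N; (0,1,1)%N]);
  ((0,0,1)%N, (0,1,0)%N, (3,0,0)%N, [:: (0,0,0)%N; (2,0,0)%N; (0,1,0)%N; (2,1,0)%N; (0,0,1)%N; (2,0,1)%N; (0,1,1)%N; (2,1,1)%N]);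
  ((0,0,1)%N, (0,1,0)%N, (3,0,0)%N, [:: (0,0,0)%N; (2,0,0)%N; (0,1,0)%N; (2,1,0)%N; (0,0,1)%N; (2,0,1)%N; (0,1,1)%N; (2,1,1)%N]);
  ((0,1,0)%N, (1,0,1)%N, (2,0,2)%N, [:: (0,0,0)%N; (0,0,3)%N; (0,0,2)%N; (0,0,1)%N; (0,1,0)%N; (0,1,3)%N; (0,1,2)%N; (0,1,1)%N]);
  ((0,0,1)%N, (1,1,0)%N, (2,2,0)%N, [:: (0,0,0)%N; (0,3,0)%N; (0,2,0)%N; (0,1,0)%N; (0,0,1)%N; (0,3,1)%N; (0,2,1)%N; (0,1,1)%N]);
  ((0,1,1)%N, (1,0,1)%N, (2,2,3)%N, [:: (0,0,0)%N; (0,0,3)%N; (0,1,2)%N; (0,1,1)%N; (0,1,3)%N; (0,1,0)%N; (0,0,1)%N; (0,0,2)%N]);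
  ((0,0,3)%N, (0,1,0)%N, (1,0,0)%N, [:: (0,0,0)%N; (1,0,0)%N; (0,1,0)%N; (1,1,0)%N; (0,0,2)%N; (1,0,2)%N; (0,1,2)%N; (1,1,2)%N]);
  ((0,0,1)%N, (1,1,0)%N, (2,2,0)%N, [:: (0,0,0)%N; (0,3,0)%N; (0,2,0)%N; (0,1,0)%N; (0,0,1)%N; (0,3,1)%N; (0,2,1)%N; (0,1,1)%N]);
  ((0,1,1)%N, (1,0,1)%N, (2,2,3)%N, [:: (0,0,0)%N; (0,0,3)%N; (0,1,2)%N; (0,1,1)%N; (0,1,3)%N; (0,1,0)%N; (0,0,1)%N; (0,0,2)%N]);
  ((0,0,1)%N, (0,1,0)%N, (3,0,0)%N, [:: (0,0,0)%N; (2,0,0)%N; (0,1,0)%N; (2,1,0)%N; (0,0,1)%N; (2,0,1)%N; (0,1,1)%N; (2,1,1)%N]);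
  ((0,1,0)%N, (1,0,1)%N, (2,0,2)%N, [:: (0,0,0)%N; (0,0,3)%N; (0,0,2)%N; (0,0,1)%N; (0,1,0)%N; (0,1,3)%N; (0,1,2)%N; (0,1,1)%N]);
  ((0,1,0)%N, (1,0,1)%N, (2,0,2)%N, [:: (0,0,0)%N; (0,0,3)%N; (0,0,2)%N; (0,0,1)%N; (0,1,0)%N; (0,1,3)%N; (0,1,2)%N; (0,1,1)%N]);
  ((0,0,1)%N, (0,1,0)%N, (3,0,0)%N, [:: (0,0,0)%N; (2,0,0)%N; (0,1,0)%N; (2,1,0)%N; (0,0,1)%N; (2,0,1)%N; (0,1,1)%N; (2,1,1)%N]);
  ((0,1,1)%N, (1,0,1)%N, (2,2,3)%N, [:: (0,0,0)%N; (0,0,3)%N; (0,1,2)%N; (0,1,1)%N; (0,1,3)%N; (0,1,0)%N; (0,0,1)%N; (0,0,2)%N]);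
  ((0,0,1)%N, (1,1,0)%N, (2,2,0)%N, [:: (0,0,0)%N; (0,3,0)%N; (0,2,0)%N; (0,1,0)%N; (0,0,1)%N; (0,3,1)%N; (0,2,1)%N; (0,1,1)%N]);
  ((0,0,3)%N, (0,1,0)%N, (1,0,0)%N, [:: (0,0,0)%N; (1,0,0)%N; (0,1,0)%N; (1,1,0)%N; (0,0,2)%N; (1,0,2)%N; (0,1,2)%N; (1,1,2)%N]);
  ((0,1,1)%N, (0,2,2)%N, (1,0,0)%N, [:: (0,0,0)%N; (1,0,0)%N; (0,0,3)%N; (1,0,3)%N; (0,0,2)%N; (1,0,2)%N; (0,0,1)%N; (1,0,1)%N]);
  ((0,0,1)%N, (0,3,0)%N, (1,0,0)%N, [:: (0,0,0)%N; (1,0,0)%N; (0,2,0)%N; (1,2,0)%N; (0,0,1)%N; (1,0,1)%N; (0,2,1)%N; (1,2,1)%N]);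
  ((0,1,0)%N, (1,0,1)%N, (2,0,2)%N, [:: (0,0,0)%N; (0,0,3)%N; (0,0,2)%N; (0,0,1)%N; (0,1,0)%N; (0,1,3)%N; (0,1,2)%N; (0,1,1)%N]);
  ((0,0,1)%N, (0,1,0)%N, (3,0,0)%N, [:: (0,0,0)%N; (2,0,0)%N; (0,1,0)%N; (2,1,0)%N; (0,0,1)%N; (2,0,1)%N; (0,1,1)%N; (2,1,1)%N]);
  ((0,1,1)%N, (1,0,1)%N, (2,2,3)%N, [:: (0,0,0)%N; (0,0,3)%N; (0,1,2)%N; (0,1,1)%N; (0,1,3)%N; (0,1,0)%N; (0,0,1)%N; (0,0,2)%N]);
  ((0,0,1)%N, (1,1,0)%N, (2,2,0)%N, [:: (0,0,0)%N; (0,3,0)%N; (0,2,0)%N; (0,1,0)%N; (0,0,1)%N; (0,3,1)%N; (0,2,1)%N; (0,1,1)%N]);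
  ((0,0,1)%N, (1,1,0)%N, (2,2,0)%N, [:: (0,0,0)%N; (0,3,0)%N; (0,2,0)%N; (0,1,0)%N; (0,0,1)%N; (0,3,1)%N; (0,2,1)%N; (0,1,1)%N]);
  ((0,1,1)%N, (1,0,1)%N, (2,2,3)%N, [:: (0,0,0)%N; (0,0,3)%N; (0,1,2)%N; (0,1,1)%N; (0,1,3)%N; (0,1,0)%N; (0,0,1)%N; (0,0,2)%N]);
  ((0,0,1)%N, (0,1,0)%N, (3,0,0)%N, [:: (0,0,0)%N; (2,0,0)%N; (0,1,0)%N; (2,1,0)%N; (0,0,1)%N; (2,0,1)%N; (0,1,1)%N; (2,1,1)%N]);
  ((0,1,0)%N, (1,0,1)%N, (2,0,2)%N, [:: (0,0,0)%N; (0,0,3)%N; (0,0,2)%N; (0,0,1)%N; (0,1,0)%N; (0,1,3)%N; (0,1,2)%N; (0,1,1)%N]);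
  ((0,0,1)%N, (0,3,0)%N, (1,0,0)%N, [:: (0,0,0)%N; (1,0,0)%N; (0,2,0)%N; (1,2,0)%N; (0,0,1)%N; (1,0,1)%N; (0,2,1)%N; (1,2,1)%N]);
  ((0,1,1)%N, (0,2,2)%N, (1,0,0)%N, [:: (0,0,0)%N; (1,0,0)%N; (0,0,3)%N; (1,0,3)%N; (0,0,2)%N; (1,0,2)%N; (0,0,1)%N; (1,0,1)%N]);
  ((0,2,2)%N, (1,1,3)%N, (2,0,2)%N, [:: (0,0,0)%N; (0,1,3)%N; (0,0,2)%N; (0,1,1)%N; (0,1,2)%N; (0,0,1)%N; (0,1,0)%N; (0,0,3)%N]);
  ((0,3,1)%N, (1,1,3)%N, (2,1,2)%N, [:: (0,0,0)%N; (0,2,2)%N; (0,2,1)%N; (0,0,3)%N; (0,2,3)%N; (0,0,1)%N; (0,0,2)%N; (0,2,0)%N]);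
  ((0,1,3)%N, (1,2,2)%N, (2,2,1)%N, [:: (0,0,0)%N; (0,1,3)%N; (0,1,2)%N; (0,0,1)%N; (0,1,1)%N; (0,0,2)%N; (0,0,3)%N; (0,1,0)%N]);
  ((0,1,3)%N, (0,2,2)%N, (3,0,0)%N, [:: (0,0,0)%N; (2,0,0)%N; (0,0,1)%N; (2,0,1)%N; (0,0,2)%N; (2,0,2)%N; (0,0,3)%N; (2,0,3)%N]);
  ((0,1,3)%N, (0,2,2)%N, (3,0,0)%N, [:: (0,0,0)%N; (2,0,0)%N; (0,0,1)%N; (2,0,1)%N; (0,0,2)%N; (2,0,2)%N; (0,0,3)%N; (2,0,3)%N]);
  ((0,1,3)%N, (1,2,2)%N, (2,2,1)%N, [:: (0,0,0)%N; (0,1,3)%N; (0,1,2)%N; (0,0,1)%N; (0,1,1)%N; (0,0,2)%N; (0,0,3)%N; (0,1,0)%N]);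
  ((0,3,1)%N, (1,1,3)%N, (2,1,2)%N, [:: (0,0,0)%N; (0,2,2)%N; (0,2,1)%N; (0,0,3)%N; (0,2,3)%N; (0,0,1)%N; (0,0,2)%N; (0,2,0)%N]);
  ((0,2,2)%N, (1,1,3)%N, (2,0,2)%N, [:: (0,0,0)%N; (0,1,3)%N; (0,0,2)%N; (0,1,1)%N; (0,1,2)%N; (0,0,1)%N; (0,1,0)%N; (0,0,3)%N]);
  ((0,3,3)%N, (1,0,3)%N, (2,1,2)%N, [:: (0,0,0)%N; (0,0,1)%N; (0,2,3)%N; (0,2,2)%N; (0,2,1)%N; (0,2,0)%N; (0,0,2)%N; (0,0,3)%N]);
  ((0,3,0)%N, (1,0,3)%N, (2,0,2)%N, [:: (0,0,0)%N; (0,0,1)%N; (0,0,2)%N; (0,0,3)%N; (0,2,0)%N; (0,2,1)%N; (0,2,2)%N; (0,2,3)%N]);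
  ((0,0,3)%N, (1,3,0)%N, (2,2,0)%N, [:: (0,0,0)%N; (0,1,0)%N; (0,2,0)%N; (0,3,0)%N; (0,0,2)%N; (0,1,2)%N; (0,2,2)%N; (0,3,2)%N]);
  ((0,0,3)%N, (0,3,0)%N, (3,0,0)%N, [:: (0,0,0)%N; (2,0,0)%N; (0,2,0)%N; (2,2,0)%N; (0,0,2)%N; (2,0,2)%N; (0,2,2)%N; (2,2,2)%N]);
  ((0,0,3)%N, (0,3,0)%N, (3,0,0)%N, [:: (0,0,0)%N; (2,0,0)%N; (0,2,0)%N; (2,2,0)%N; (0,0,2)%N; (2,0,2)%N; (0,2,2)%N; (2,2,2)%N]);
  ((0,0,3)%N, (1,3,0)%N, (2,2,0)%N, [:: (0,0,0)%N; (0,1,0)%N; (0,2,0)%N; (0,3,0)%N; (0,0,2)%N; (0,1,2)%N; (0,2,2)%N; (0,3,2)%N]);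
  ((0,3,0)%N, (1,0,3)%N, (2,0,2)%N, [:: (0,0,0)%N; (0,0,1)%N; (0,0,2)%N; (0,0,3)%N; (0,2,0)%N; (0,2,1)%N; (0,2,2)%N; (0,2,3)%N]);
  ((0,3,3)%N, (1,0,3)%N, (2,1,2)%N, [:: (0,0,0)%N; (0,0,1)%N; (0,2,3)%N; (0,2,2)%N; (0,2,1)%N; (0,2,0)%N; (0,0,2)%N; (0,0,3)%N]);
  ((0,0,3)%N, (0,1,0)%N, (1,0,0)%N, [:: (0,0,0)%N; (1,0,0)%N; (0,1,0)%N; (1,1,0)%N; (0,0,2)%N; (1,0,2)%N; (0,1,2)%N; (1,1,2)%N]);
  ((0,3,0)%N, (1,0,3)%N, (2,0,2)%N, [:: (0,0,0)%N; (0,0,1)%N; (0,0,2)%N; (0,0,3)%N; (0,2,0)%N; (0,2,1)%N; (0,2,2)%N; (0,2,3)%N]);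
  ((0,3,3)%N, (1,0,3)%N, (2,1,2)%N, [:: (0,0,0)%N; (0,0,1)%N; (0,2,3)%N; (0,2,2)%N; (0,2,1)%N; (0,2,0)%N; (0,0,2)%N; (0,0,3)%N]);
  ((0,0,3)%N, (0,3,0)%N, (3,0,0)%N, [:: (0,0,0)%N; (2,0,0)%N; (0,2,0)%N; (2,2,0)%N; (0,0,2)%N; (2,0,2)%N; (0,2,2)%N; (2,2,2)%N]);
  ((0,0,3)%N, (1,3,0)%N, (2,2,0)%N, [:: (0,0,0)%N; (0,1,0)%N; (0,2,0)%N; (0,3,0)%N; (0,0,2)%N; (0,1,2)%N; (0,2,2)%N; (0,3,2)%N]);
  ((0,0,3)%N, (1,3,0)%N, (2,2,0)%N, [:: (0,0,0)%N; (0,1,0)%N; (0,2,0)%N; (0,3,0)%N; (0,0,2)%N; (0,1,2)%N; (0,2,2)%N; (0,3,2)%N]);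
  ((0,0,3)%N, (0,3,0)%N, (3,0,0)%N, [:: (0,0,0)%N; (2,0,0)%N; (0,2,0)%N; (2,2,0)%N; (0,0,2)%N; (2,0,2)%N; (0,2,2)%N; (2,2,2)%N]);
  ((0,3,3)%N, (1,0,3)%N, (2,1,2)%N, [:: (0,0,0)%N; (0,0,1)%N; (0,2,3)%N; (0,2,2)%N; (0,2,1)%N; (0,2,0)%N; (0,0,2)%N; (0,0,3)%N]);
  ((0,3,0)%N, (1,0,3)%N, (2,0,2)%N, [:: (0,0,0)%N; (0,0,1)%N; (0,0,2)%N; (0,0,3)%N; (0,2,0)%N; (0,2,1)%N; (0,2,2)%N; (0,2,3)%N]);
  ((0,3,1)%N, (1,1,3)%N, (2,1,2)%N, [:: (0,0,0)%N; (0,2,2)%N; (0,2,1)%N; (0,0,3)%N; (0,2,3)%N; (0,0,1)%N; (0,0,2)%N; (0,2,0)%N]);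
  ((0,2,2)%N, (1,1,3)%N, (2,0,2)%N, [:: (0,0,0)%N; (0,1,3)%N; (0,0,2)%N; (0,1,1)%N; (0,1,2)%N; (0,0,1)%N; (0,1,0)%N; (0,0,3)%N]);
  ((0,1,3)%N, (0,2,2)%N, (3,0,0)%N, [:: (0,0,0)%N; (2,0,0)%N; (0,0,1)%N; (2,0,1)%N; (0,0,2)%N; (2,0,2)%N; (0,0,3)%N; (2,0,3)%N]);
  ((0,1,3)%N, (1,2,2)%N, (2,2,1)%N, [:: (0,0,0)%N; (0,1,3)%N; (0,1,2)%N; (0,0,1)%N; (0,1,1)%N; (0,0,2)%N; (0,0,3)%N; (0,1,0)%N]);
  ((0,1,3)%N, (1,2,2)%N, (2,2,1)%N, [:: (0,0,0)%N; (0,1,3)%N; (0,1,2)%N; (0,0,1)%N; (0,1,1)%N; (0,0,2)%N; (0,0,3)%N; (0,1,0)%N]);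
  ((0,1,3)%N, (0,2,2)%N, (3,0,0)%N, [:: (0,0,0)%N; (2,0,0)%N; (0,0,1)%N; (2,0,1)%N; (0,0,2)%N; (2,0,2)%N; (0,0,3)%N; (2,0,3)%N]);
  ((0,2,2)%N, (1,1,3)%N, (2,0,2)%N, [:: (0,0,0)%N; (0,1,3)%N; (0,0,2)%N; (0,1,1)%N; (0,1,2)%N; (0,0,1)%N; (0,1,0)%N; (0,0,3)%N]);
  ((0,3,1)%N, (1,1,3)%N, (2,1,2)%N, [:: (0,0,0)%N; (0,2,2)%N; (0,2,1)%N; (0,0,3)%N; (0,2,3)%N; (0,0,1)%N; (0,0,2)%N; (0,2,0)%N]);
  ((0,0,1)%N, (0,3,0)%N, (1,0,0)%N, [:: (0,0,0)%N; (1,0,0)%N; (0,2,0)%N; (1,2,0)%N; (0,0,1)%N; (1,0,1)%N; (0,2,1)%N; (1,2,1)%N]);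
  ((0,1,1)%N, (0,2,2)%N, (1,0,0)%N, [:: (0,0,0)%N; (1,0,0)%N; (0,0,3)%N; (1,0,3)%N; (0,0,2)%N; (1,0,2)%N; (0,0,1)%N; (1,0,1)%N]);
  ((0,0,1)%N, (0,1,0)%N, (3,0,0)%N, [:: (0,0,0)%N; (2,0,0)%N; (0,1,0)%N; (2,1,0)%N; (0,0,1)%N; (2,0,1)%N; (0,1,1)%N; (2,1,1)%N]);
  ((0,1,0)%N, (1,0,1)%N, (2,0,2)%N, [:: (0,0,0)%N; (0,0,3)%N; (0,0,2)%N; (0,0,1)%N; (0,1,0)%N; (0,1,3)%N; (0,1,2)%N; (0,1,1)%N]);
  ((0,0,1)%N, (1,1,0)%N, (2,2,0)%N, [:: (0,0,0)%N; (0,3,0)%N; (0,2,0)%N; (0,1,0)%N; (0,0,1)%N; (0,3,1)%N; (0,2,1)%N; (0,1,1)%N]);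
  ((0,1,1)%N, (1,0,1)%N, (2,2,3)%N, [:: (0,0,0)%N; (0,0,3)%N; (0,1,2)%N; (0,1,1)%N; (0,1,3)%N; (0,1,0)%N; (0,0,1)%N; (0,0,2)%N]);
  ((0,1,1)%N, (1,0,1)%N, (2,2,3)%N, [:: (0,0,0)%N; (0,0,3)%N; (0,1,2)%N; (0,1,1)%N; (0,1,3)%N; (0,1,0)%N; (0,0,1)%N; (0,0,2)%N]);
  ((0,0,1)%N, (1,1,0)%N, (2,2,0)%N, [:: (0,0,0)%N; (0,3,0)%N; (0,2,0)%N; (0,1,0)%N; (0,0,1)%N; (0,3,1)%N; (0,2,1)%N; (0,1,1)%N]);
  ((0,1,0)%N, (1,0,1)%N, (2,0,2)%N, [:: (0,0,0)%N; (0,0,3)%N; (0,0,2)%N; (0,0,1)%N; (0,1,0)%N; (0,1,3)%N; (0,1,2)%N; (0,1,1)%N]);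
  ((0,0,1)%N, (0,1,0)%N, (3,0,0)%N, [:: (0,0,0)%N; (2,0,0)%N; (0,1,0)%N; (2,1,0)%N; (0,0,1)%N; (2,0,1)%N; (0,1,1)%N; (2,1,1)%N]);
  ((0,1,1)%N, (0,2,2)%N, (1,0,0)%N, [:: (0,0,0)%N; (1,0,0)%N; (0,0,3)%N; (1,0,3)%N; (0,0,2)%N; (1,0,2)%N; (0,0,1)%N; (1,0,1)%N]);
  ((0,0,1)%N, (0,3,0)%N, (1,0,0)%N, [:: (0,0,0)%N; (1,0,0)%N; (0,2,0)%N; (1,2,0)%N; (0,0,1)%N; (1,0,1)%N; (0,2,1)%N; (1,2,1)%N]);
  ((0,0,3)%N, (1,3,0)%N, (2,2,0)%N, [:: (0,0,0)%N; (0,1,0)%N; (0,2,0)%N; (0,3,0)%N; (0,0,2)%N; (0,1,2)%N; (0,2,2)%N; (0,3,2)%N]);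
  ((0,0,3)%N, (0,3,0)%N, (3,0,0)%N, [:: (0,0,0)%N; (2,0,0)%N; (0,2,0)%N; (2,2,0)%N; (0,0,2)%N; (2,0,2)%N; (0,2,2)%N; (2,2,2)%N]);
  ((0,3,3)%N, (1,0,3)%N, (2,1,2)%N, [:: (0,0,0)%N; (0,0,1)%N; (0,2,3)%N; (0,2,2)%N; (0,2,1)%N; (0,2,0)%N; (0,0,2)%N; (0,0,3)%N]);
  ((0,3,0)%N, (1,0,3)%N, (2,0,2)%N, [:: (0,0,0)%N; (0,0,1)%N; (0,0,2)%N; (0,0,3)%N; (0,2,0)%N; (0,2,1)%N; (0,2,2)%N; (0,2,3)%N]);
  ((0,3,0)%N, (1,0,3)%N, (2,0,2)%N, [:: (0,0,0)%N; (0,0,1)%N; (0,0,2)%N; (0,0,3)%N; (0,2,0)%N; (0,2,1)%N; (0,2,2)%N; (0,2,3)%N]);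
  ((0,3,3)%N, (1,0,3)%N, (2,1,2)%N, [:: (0,0,0)%N; (0,0,1)%N; (0,2,3)%N; (0,2,2)%N; (0,2,1)%N; (0,2,0)%N; (0,0,2)%N; (0,0,3)%N]);
  ((0,0,3)%N, (0,3,0)%N, (3,0,0)%N, [:: (0,0,0)%N; (2,0,0)%N; (0,2,0)%N; (2,2,0)%N; (0,0,2)%N; (2,0,2)%N; (0,2,2)%N; (2,2,2)%N]);
  ((0,0,3)%N, (1,3,0)%N, (2,2,0)%N, [:: (0,0,0)%N; (0,1,0)%N; (0,2,0)%N; (0,3,0)%N; (0,0,2)%N; (0,1,2)%N; (0,2,2)%N; (0,3,2)%N]);
  ((0,1,3)%N, (1,2,2)%N, (2,2,1)%N, [:: (0,0,0)%N; (0,1,3)%N; (0,1,2)%N; (0,0,1)%N; (0,1,1)%N; (0,0,2)%N; (0,0,3)%N; (0,1,0)%N]);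
  ((0,1,3)%N, (0,2,2)%N, (3,0,0)%N, [:: (0,0,0)%N; (2,0,0)%N; (0,0,1)%N; (2,0,1)%N; (0,0,2)%N; (2,0,2)%N; (0,0,3)%N; (2,0,3)%N]);
  ((0,2,2)%N, (1,1,3)%N, (2,0,2)%N, [:: (0,0,0)%N; (0,1,3)%N; (0,0,2)%N; (0,1,1)%N; (0,1,2)%N; (0,0,1)%N; (0,1,0)%N; (0,0,3)%N]);
  ((0,3,1)%N, (1,1,3)%N, (2,1,2)%N, [:: (0,0,0)%N; (0,2,2)%N; (0,2,1)%N; (0,0,3)%N; (0,2,3)%N; (0,0,1)%N; (0,0,2)%N; (0,2,0)%N]);
  ((0,3,1)%N, (1,1,3)%N, (2,1,2)%N, [:: (0,0,0)%N; (0,2,2)%N; (0,2,1)%N; (0,0,3)%N; (0,2,3)%N; (0,0,1)%N; (0,0,2)%N; (0,2,0)%N]);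
  ((0,2,2)%N, (1,1,3)%N, (2,0,2)%N, [:: (0,0,0)%N; (0,1,3)%N; (0,0,2)%N; (0,1,1)%N; (0,1,2)%N; (0,0,1)%N; (0,1,0)%N; (0,0,3)%N]);
  ((0,1,3)%N, (0,2,2)%N, (3,0,0)%N, [:: (0,0,0)%N; (2,0,0)%N; (0,0,1)%N; (2,0,1)%N; (0,0,2)%N; (2,0,2)%N; (0,0,3)%N; (2,0,3)%N]);
  ((0,1,3)%N, (1,2,2)%N, (2,2,1)%N, [:: (0,0,0)%N; (0,1,3)%N; (0,1,2)%N; (0,0,1)%N; (0,1,1)%N; (0,0,2)%N; (0,0,3)%N; (0,1,0)%N]);
  ((0,0,3)%N, (0,1,0)%N, (1,0,0)%N, [:: (0,0,0)%N; (1,0,0)%N; (0,1,0)%N; (1,1,0)%N; (0,0,2)%N; (1,0,2)%N; (0,1,2)%N; (1,1,2)%N]);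
  ((0,1,3)%N, (0,2,2)%N, (3,0,0)%N, [:: (0,0,0)%N; (2,0,0)%N; (0,0,1)%N; (2,0,1)%N; (0,0,2)%N; (2,0,2)%N; (0,0,3)%N; (2,0,3)%N]);
  ((0,1,3)%N, (1,2,2)%N, (2,2,1)%N, [:: (0,0,0)%N; (0,1,3)%N; (0,1,2)%N; (0,0,1)%N; (0,1,1)%N; (0,0,2)%N; (0,0,3)%N; (0,1,0)%N]);
  ((0,3,1)%N, (1,1,3)%N, (2,1,2)%N, [:: (0,0,0)%N; (0,2,2)%N; (0,2,1)%N; (0,0,3)%N; (0,2,3)%N; (0,0,1)%N; (0,0,2)%N; (0,2,0)%N]);
  ((0,2,2)%N, (1,1,3)%N, (2,0,2)%N, [:: (0,0,0)%N; (0,1,3)%N; (0,0,2)%N; (0,1,1)%N; (0,1,2)%N; (0,0,1)%N; (0,1,0)%N; (0,0,3)%N]);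
  ((0,2,2)%N, (1,1,3)%N, (2,0,2)%N, [:: (0,0,0)%N; (0,1,3)%N; (0,0,2)%N; (0,1,1)%N; (0,1,2)%N; (0,0,1)%N; (0,1,0)%N; (0,0,3)%N]);
  ((0,3,1)%N, (1,1,3)%N, (2,1,2)%N, [:: (0,0,0)%N; (0,2,2)%N; (0,2,1)%N; (0,0,3)%N; (0,2,3)%N; (0,0,1)%N; (0,0,2)%N; (0,2,0)%N]);
  ((0,1,3)%N, (1,2,2)%N, (2,2,1)%N, [:: (0,0,0)%N; (0,1,3)%N; (0,1,2)%N; (0,0,1)%N; (0,1,1)%N; (0,0,2)%N; (0,0,3)%N; (0,1,0)%N]);
  ((0,1,3)%N, (0,2,2)%N, (3,0,0)%N, [:: (0,0,0)%N; (2,0,0)%N; (0,0,1)%N; (2,0,1)%N; (0,0,2)%N; (2,0,2)%N; (0,0,3)%N; (2,0,3)%N]);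
  ((0,0,3)%N, (0,3,0)%N, (3,0,0)%N, [:: (0,0,0)%N; (2,0,0)%N; (0,2,0)%N; (2,2,0)%N; (0,0,2)%N; (2,0,2)%N; (0,2,2)%N; (2,2,2)%N]);
  ((0,0,3)%N, (1,3,0)%N, (2,2,0)%N, [:: (0,0,0)%N; (0,1,0)%N; (0,2,0)%N; (0,3,0)%N; (0,0,2)%N; (0,1,2)%N; (0,2,2)%N; (0,3,2)%N]);
  ((0,3,0)%N, (1,0,3)%N, (2,0,2)%N, [:: (0,0,0)%N; (0,0,1)%N; (0,0,2)%N; (0,0,3)%N; (0,2,0)%N; (0,2,1)%N; (0,2,2)%N; (0,2,3)%N]);
  ((0,3,3)%N, (1,0,3)%N, (2,1,2)%N, [:: (0,0,0)%N; (0,0,1)%N; (0,2,3)%N; (0,2,2)%N; (0,2,1)%N; (0,2,0)%N; (0,0,2)%N; (0,0,3)%N]);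
  ((0,3,3)%N, (1,0,3)%N, (2,1,2)%N, [:: (0,0,0)%N; (0,0,1)%N; (0,2,3)%N; (0,2,2)%N; (0,2,1)%N; (0,2,0)%N; (0,0,2)%N; (0,0,3)%N]);
  ((0,3,0)%N, (1,0,3)%N, (2,0,2)%N, [:: (0,0,0)%N; (0,0,1)%N; (0,0,2)%N; (0,0,3)%N; (0,2,0)%N; (0,2,1)%N; (0,2,2)%N; (0,2,3)%N]);
  ((0,0,3)%N, (1,3,0)%N, (2,2,0)%N, [:: (0,0,0)%N; (0,1,0)%N; (0,2,0)%N; (0,3,0)%N; (0,0,2)%N; (0,1,2)%N; (0,2,2)%N; (0,3,2)%N]);
  ((0,0,3)%N, (0,3,0)%N, (3,0,0)%N, [:: (0,0,0)%N; (2,0,0)%N; (0,2,0)%N; (2,2,0)%N; (0,0,2)%N; (2,0,2)%N; (0,2,2)%N; (2,2,2)%N])].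

Definition lab (a : T * T * T) (P : T) : bool * bool * bool := (lin a.1.1 P, lin a.1.2 P, lin a.2 P).
Definition idx (b : bool * bool * bool) : nat := (4 * b.1.1 + 2 * b.1.2 + b.2)%N.
Definition B8 : seq (bool * bool * bool) :=
  [:: (false, false, false); (false, false, true); (false, true, false); (false, true, true);
      (true, false, false); (true, false, true); (true, true, false); (true, true, true)].
Definition Hlin (h b : bool * bool * bool) : bool := (b.1.1 && h.1.1) (+) (b.1.2 && h.1.2) (+) (b.2 && h.2).
Definition negl (u : seq int) : seq int := map (fun x => - x) u.
Definition K4a := all (fun ld : seq nat * ((T * T * T) * seq T) =>
   let l := ld.1 in let a := ld.2.1 in let rs := ld.2.2 in
   [&& size rs == 8%N, all valid rs &
   all (fun P => let v := map (Lfn P (vl l)) I8 in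
                 let u := map (Lfn (nth e0 rs (idx (lab a P))) (vl l)) I8 in
                 (v == u) || (v == negl u)) T64]) (zip Rl Dat).
Definition K4b := all (fun ld : seq nat * ((T * T * T) * seq T) =>
   let l := ld.1 in let rs := ld.2.2 in
   let Ul := [seq map (Lfn r (vl l)) I8 | r <- rs] in
   all (fun k : seq nat * seq int =>
     let ds := [seq dotl k.2 u == 0 | u <- Ul] in
     let d b := nth false ds (idx b) in
     let d0 := d (false, false, false) in
     let h := (d (true, false, false) (+) d0, d (false, true, false) (+) d0, d (false, false, true) (+) d0) in
     if all (fun b => (d b (+) d0) == Hlin h b) B8 then true
     else has (fun u => (k.2 == u) || (k.2 == negl u)) Ul) RP) (zip Rl Dat).
Definition K5 := all (fun k => dotc (vl k) (vl k) != 0) Rl.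
Fixpoint hasb {T : Type} (p : T -> bool) (s : seq T) : bool :=
  if s is x :: s' then (if p x then true else hasb p s') else false.
Lemma hasbE {T : Type} (p : T -> bool) s : hasb p s = has p s.
Proof. by elim: s => //= x s ->; case: (p x). Qed.
Definition K6 := all (fun a => all (fun b => if a.1 == b.1 then true else if dotl a.2 b.2 == 0 then true else
   hasb (fun c => if dotl a.2 c.2 == 0 then dotl c.2 b.2 == 0 else false) RP) RP) RP.

Lemma K0_ok : K0. Proof. vm_compute. reflexivity. Qed.
Lemma K1_ok : K1. Proof. vm_compute. reflexivity. Qed.
Lemma K5_ok : K5. Proof. vm_compute. reflexivity. Qed.
Lemma K6_ok : K6. Proof. vm_compute. reflexivity. Qed.
Lemma sizes : (size Rl == 120%N) && (size Dat == 120%N). Proof. vm_compute. reflexivity. Qed.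
Lemma K4a_ok : K4a. Proof. vm_compute. reflexivity. Qed.
Lemma K4b_ok : K4b. Proof. vm_compute. reflexivity. Qed.

Lemma pauliE (c : 'I_4) (a b : 'I_2) : pauli c a b = pen c a b.
Proof.
case: c => [[|[|[|[|c]]]] Hc] //=; rewrite /pauli /= /PI /PX /PY /PZ ?mxE;
  try rewrite !big_ord_recl big_ord0 !mxE;
  case: a => [[|[|a]] Ha] //; case: b => [[|[|b]] Hb] //.
Qed.

Definition tri (m : Lelt) : T := (val m.1.1, val m.1.2, val m.2).
Lemma valid_tri m : valid (tri m).
Proof. by case: m => [[a b] c]; rewrite /valid /tri /= !ltn_ord. Qed.

Lemma inI4 a : (a \in I4) = (a < 4)%N. Proof. by rewrite mem_iota. Qed.
Lemma inI8 a : (a \in I8) = (a < 8)%N. Proof. by rewrite mem_iota. Qed.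

Lemma K0E a b c i j : (a < 4)%N -> (b < 4)%N -> (c < 4)%N -> (i < 8)%N -> (j < 8)%N ->
   pen a (i %/ 4) (j %/ 4) * pen b (i %/ 2 %% 2) (j %/ 2 %% 2) * pen c (i %% 2) (j %% 2)
   = if (j == pmn (a, b, c) i)%N then sgn (a, b, c) i else 0.
Proof.
move=> ha hb hc hi hj; apply/eqP.
move/allP: K0_ok => /(_ a); rewrite inI4 => /(_ ha) /allP /(_ b); rewrite inI4 => /(_ hb)
  /allP /(_ c); rewrite inI4 => /(_ hc) /allP /(_ i); rewrite inI8 => /(_ hi)
  /allP /(_ j); rewrite inI8 => /(_ hj) //.
Qed.

Lemma LmxE (m : Lelt) (i j : nat) : (i < 8)%N -> (j < 8)%N ->
  Lmx m (inord i) (inord j) = if (j == pmn (tri m) i)%N then sgn (tri m) i else 0.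
Proof.
move=> hi hj; rewrite /Lmx /kron3 mxE !pauliE /bit2 /bit1 /bit0 !inordK //; try lia.
case: m => [[a b] c] /=; rewrite /tri /=.
by apply: K0E.
Qed.

Lemma mem_T64 m : (m \in T64) = valid m.
Proof.
case: m => [[a b] c]; rewrite /valid /=.
apply/idP/idP.
- case/flatten_mapP => a' ha' /flatten_mapP [b' hb'] /mapP [c' hc' [-> -> ->]].
  by rewrite -!inI4 ha' hb' hc'.
- case/and3P => ha hb hc; apply/flatten_mapP; exists a; rewrite ?inI4 //.
  apply/flatten_mapP; exists b; rewrite ?inI4 //.
  by apply/mapP; exists c; rewrite ?inI4.
Qed.

Lemma K1E m n i : valid m -> valid n -> (i < 8)%N ->
   [&& (pmn n (pmn m i) == pmn (lmul m n) i)%N,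
       sgn m i * sgn n (pmn m i) == eps m n * sgn (lmul m n) i,
       eps m n * eps m n == 1, (pmn m i < 8)%N & sgn m i * sgn m i == 1].
Proof.
move=> vm vn hi.
move/allP: K1_ok => /(_ m); rewrite mem_T64 => /(_ vm) /allP /(_ n); rewrite mem_T64 => /(_ vn)
  /allP /(_ i); rewrite inI8 => /(_ hi) //.
Qed.

Lemma pmn_lt m i : valid m -> (i < 8)%N -> (pmn m i < 8)%N.
Proof. by move=> vm hi; case/and5P: (K1E vm vm hi). Qed.
Lemma sgn_sq m i : valid m -> (i < 8)%N -> sgn m i * sgn m i = 1.
Proof. by move=> vm hi; case/and5P: (K1E vm vm hi) => _ _ _ _ /eqP. Qed.
Lemma eps_sq m n : valid m -> valid n -> eps m n * eps m n = 1.
Proof. by move=> vm vn; case/and5P: (K1E vm vn (isT : (0 < 8)%N)) => _ _ /eqP. Qed.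
Lemma pmn_mul m n i : valid m -> valid n -> (i < 8)%N -> pmn n (pmn m i) = pmn (lmul m n) i.
Proof. by move=> vm vn hi; case/and5P: (K1E vm vn hi) => /eqP. Qed.
Lemma sgn_mul m n i : valid m -> valid n -> (i < 8)%N ->
  sgn m i * sgn n (pmn m i) = eps m n * sgn (lmul m n) i.
Proof. by move=> vm vn hi; case/and5P: (K1E vm vn hi) => _ /eqP. Qed.

Definition fc (a : 'cV[int]_8) (i : nat) : int := a (inord i) 0.

Lemma LmxA (m : Lelt) a i : (i < 8)%N -> fc (Lmx m *m a) i = Lfn (tri m) (fc a) i.
Proof.
move=> hi; rewrite /fc /Lfn mxE.
have hp := pmn_lt (valid_tri m) hi.
rewrite (bigD1 (inord (pmn (tri m) i))) // LmxE // eqxx.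
rewrite big1 => [|j hj]; first exact: addr0.
rewrite -[j in Lmx _ _ j]inord_val LmxE //; case: eqP => [E|]; last by rewrite mul0r.
by move/eqP: hj; case; apply: val_inj; rewrite /= E inordK.
Qed.

Lemma xb_ofb x z : xb (ofb x z) = x. Proof. by case: x; case: z. Qed.
Lemma zb_ofb x z : zb (ofb x z) = z. Proof. by case: x; case: z. Qed.
Lemma pmulC a b : pmul a b = pmul b a. Proof. by rewrite /pmul addbC [zb a (+) _]addbC. Qed.
Lemma pmulA a b c : pmul (pmul a b) c = pmul a (pmul b c).
Proof. by rewrite /pmul !xb_ofb !zb_ofb !addbA. Qed.
Lemma pmulxx a : pmul a a = 0%N. Proof. by rewrite /pmul !addbb. Qed.
Lemma ofb_lt x z : (ofb x z < 4)%N. Proof. by case: x; case: z. Qed.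
Lemma lmulC m n : lmul m n = lmul n m.
Proof. by rewrite /lmul pmulC [pmul m.1.2 _]pmulC [pmul m.2 _]pmulC. Qed.
Lemma lmulA m n p : lmul (lmul m n) p = lmul m (lmul n p).
Proof. by rewrite /lmul /= !pmulA. Qed.
Lemma lmulxx m : lmul m m = e0. Proof. by rewrite /lmul !pmulxx. Qed.
Lemma valid_lmul m n : valid (lmul m n).
Proof. by rewrite /valid /lmul /= /pmul !ofb_lt. Qed.
Lemma valid_e0 : valid e0. Proof. by []. Qed.
Lemma Lfn_e0 a i : (i < 8)%N -> Lfn e0 a i = a i.
Proof. by case: i => [|[|[|[|[|[|[|[|i]]]]]]]] // _; rewrite /Lfn /sgn /pmn /= !mul1r. Qed.

Lemma dotcE a b : dotc a b = \sum_(i < 8) a i * b i.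
Proof. rewrite /dotc /dotl !big_ord_recl big_ord0 /=. reflexivity. Qed.

Lemma dotc_ext a a' b b' : (forall i, (i < 8)%N -> a i = a' i) -> (forall i, (i < 8)%N -> b i = b' i) ->
  dotc a b = dotc a' b'.
Proof. by move=> ha hb; rewrite !dotcE; apply: eq_bigr => i _; rewrite ha ?hb. Qed.
Lemma dotcC a b : dotc a b = dotc b a.
Proof. by rewrite !dotcE; apply: eq_bigr => i _; rewrite mulrC. Qed.
Lemma dotcZl e a b : dotc (fun i => e * a i) b = e * dotc a b.
Proof. by rewrite !dotcE mulr_sumr; apply: eq_bigr => i _; rewrite mulrA. Qed.
Lemma dotZE (a b : 'cV[int]_8) : dotZ a b = dotc (fc a) (fc b).
Proof. by rewrite dotcE /dotZ /fc; apply: eq_bigr => i _; rewrite inord_val. Qed.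

Lemma pmn_inv m i : valid m -> (i < 8)%N -> pmn m (pmn m i) = i.
Proof.
by move=> vm hi; rewrite pmn_mul // lmulxx; case: i hi => [|[|[|[|[|[|[|[|i]]]]]]]].
Qed.

Lemma dotc_L m a b : valid m -> dotc (Lfn m a) (Lfn m b) = dotc a b.
Proof.
move=> vm; rewrite !dotcE.
have inj : injective (fun i : 'I_8 => (inord (pmn m i) : 'I_8)).
  move=> i j /(congr1 val) /=; rewrite !inordK ?pmn_lt // => E.
  by apply: val_inj; rewrite /= -(pmn_inv vm (ltn_ord i)) E pmn_inv.
rewrite (reindex_inj inj) /=; apply: eq_bigr => i _.
rewrite /Lfn !inordK ?pmn_lt // pmn_inv // mulrACA sgn_sq ?mul1r //.
exact: pmn_lt.
Qed.

Definition sc (a b : nat -> int) (e : int) := forall i, (i < 8)%N -> a i = e * b i.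

Lemma dotc_scl a a' b e : sc a a' e -> dotc a b = e * dotc a' b.
Proof. by move=> h; rewrite -dotcZl; apply: dotc_ext. Qed.
Lemma dotc_scr a b b' e : sc b b' e -> dotc a b = e * dotc a b'.
Proof. by move=> h; rewrite dotcC (dotc_scl _ h) dotcC. Qed.
Lemma sq1_neq0 (e : int) : e * e = 1 -> e != 0.
Proof. by move=> h; apply/eqP => e0'; move: h; rewrite e0' mul0r. Qed.
Lemma eq0_sc (e x : int) : e * e = 1 -> (e * x == 0) = (x == 0).
Proof. by move=> h; rewrite mulf_eq0 (negbTE (sq1_neq0 h)). Qed.
Lemma sq1M (e f : int) : e * e = 1 -> f * f = 1 -> (e * f) * (e * f) = 1.
Proof. by move=> he hf; rewrite mulrACA he hf mul1r. Qed.

Lemma Lfn_sc m a a' e : valid m -> sc a a' e -> sc (Lfn m a) (Lfn m a') e.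
Proof. by move=> vm h i hi; rewrite /Lfn h ?pmn_lt // mulrCA. Qed.

Lemma LL m n a : valid m -> valid n -> sc (Lfn m (Lfn n a)) (Lfn (lmul m n) a) (eps m n).
Proof.
move=> vm vn i hi; rewrite /Lfn mulrA sgn_mul // pmn_mul // mulrA //.
Qed.

Lemma Lfn_sc_sym m a : valid m -> sc a (Lfn m (Lfn m a)) (eps m m).
Proof.
move=> vm i hi; rewrite (LL a vm vm hi) lmulxx Lfn_e0 // mulrA eps_sq // mul1r //.
Qed.

Lemma BL m a b : valid m -> dotc (Lfn m a) b = eps m m * dotc a (Lfn m b).
Proof. by move=> vm; rewrite (dotc_scr _ (Lfn_sc_sym b vm)) dotc_L. Qed.

Lemma Linv A a b e : valid A -> sc (Lfn A a) b e -> sc a (Lfn A b) (eps A A * e).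
Proof.
move=> vA h i hi; rewrite (Lfn_sc_sym a vA hi) (Lfn_sc vA h hi) mulrA //.
Qed.

Lemma ProjE (a : 'cV[int]_8) i j :
  Proj a i j = ((dotZ a a)%:~R)^-1 * ((a i 0)%:~R * (a j 0)%:~R).
Proof. by rewrite /Proj !mxE big_ord1 !mxE rmorph_int. Qed.

Lemma Proj_mul (a b : 'cV[int]_8) i j :
  (Proj a *m Proj b) i j = ((dotZ a a)%:~R)^-1 * ((dotZ b b)%:~R)^-1 *
     ((a i 0)%:~R * (b j 0)%:~R) * (dotZ a b)%:~R.
Proof.
rewrite mxE /dotZ [X in _ = _ * X]rmorph_sum mulr_sumr; apply: eq_bigr => k _.
rewrite !ProjE -/(dotZ a a) -/(dotZ b b) rmorphM /=; ring.
Qed.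

Lemma Proj0 (a b : 'cV[int]_8) : dotZ a a != 0 -> dotZ b b != 0 ->
  (Proj a *m Proj b == 0) = (dotZ a b == 0).
Proof.
move=> ha hb.
have ex (c : 'cV[int]_8) : dotZ c c != 0 -> exists i, c i 0 != 0.
  move=> hc; case: (boolP [exists i, c i 0 != 0]) => [/existsP //|/existsPn h].
  by move: hc; rewrite /dotZ big1 ?eqxx // => i _; move: (h i); rewrite negbK => /eqP ->; rewrite mul0r.
case: (ex a ha) => i hi; case: (ex b hb) => j hj.
apply/idP/idP => [/eqP /matrixP /(_ i j)|/eqP d0].
- rewrite Proj_mul mxE => /eqP; rewrite !mulf_eq0 !invr_eq0 !intr_eq0 (negbTE ha) (negbTE hb).
  by rewrite (negbTE hi) (negbTE hj).
- by apply/eqP/matrixP => i' j'; rewrite Proj_mul d0 mxE mulr0.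
Qed.

Definition lst (x : vec) : seq nat := [seq val ((x : {ffun 'I_8 -> 'I_3}) (inord i)) | i <- I8].
Lemma size_lst x : size (lst x) = 8%N. Proof. by rewrite size_map size_iota. Qed.
Lemma nth_lst (x : vec) i : (i < 8)%N -> nth 0%N (lst x) i = val ((x : {ffun 'I_8 -> 'I_3}) (inord i)).
Proof. by move=> hi; rewrite (nth_map 0%N) ?size_iota // nth_iota. Qed.
Lemma coordE (x : vec) (k : 'I_8) : Defs.coord ((x : {ffun 'I_8 -> 'I_3}) k) = vl (lst x) k.
Proof. by rewrite /vl nth_lst // inord_val. Qed.
Lemma fc_vecZ x i : (i < 8)%N -> fc (vecZ x) i = vl (lst x) i.
Proof. by move=> hi; rewrite /fc /vecZ mxE coordE inordK. Qed.
Lemma lst_inj : injective lst.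
Proof.
move=> x y E; apply/ffunP => i; apply: val_inj.
by rewrite -(inord_val i) -!nth_lst // E.
Qed.

Lemma inord_eq (k i : nat) : (k < 8)%N -> (i < 8)%N -> (inord k == inord i :> 'I_8) = (k == i).
Proof. by move=> hk hi; apply/eqP/eqP => [/(congr1 val)|->]; rewrite /= ?inordK. Qed.
Lemma exI8 (P : pred 'I_8) : [exists i, P i] = has (fun i => P (inord i)) I8.
Proof.
apply/existsP/hasP => [[i Pi]|[i hi Pi]]; last by exists (inord i).
by exists (val i); rewrite ?inI8 ?inord_val ?ltn_ord.
Qed.
Lemma allI8 (P : pred 'I_8) : [forall i, P i] = all (fun i => P (inord i)) I8.
Proof.
apply/forallP/allP => [h i _|h i]; first exact: h.
by rewrite -(inord_val i); apply: h; rewrite inI8.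
Qed.
Lemma prodI8 (F : 'I_8 -> int) : \prod_(k < 8) F k = foldr (fun k acc => F (inord k) * acc) 1 I8.
Proof.
transitivity (\prod_(k < 8) F (inord k)); first by apply: eq_bigr => k _; rewrite inord_val.
by rewrite -(big_mkord xpredT (fun k => F (inord k))) unlock.
Qed.

Lemma eq_in_foldr_mul (s : seq nat) (F G : nat -> int) : {in s, F =1 G} ->
  foldr (fun k acc => F k * acc) 1 s = foldr (fun k acc => G k * acc) 1 s.
Proof.
elim: s => //= a s IH h; rewrite h ?mem_head // IH // => k hk; apply: h; rewrite inE hk orbT //.
Qed.

Lemma rootE (x : vec) : is_root x = rootc_ee (lst x) || rootc_pm (lst x).
Proof.
congr orb.
- rewrite /is_root_ee exI8; apply: eq_in_has => i; rewrite inI8 => hi.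
  rewrite exI8; apply: eq_in_has => j; rewrite inI8 => hj.
  rewrite allI8 !inordK //; congr andb; apply: eq_in_all => k; rewrite inI8 => hk.
  by rewrite coordE inordK // !inord_eq.
- rewrite /is_root_pm /rootc_pm allI8 prodI8; congr andb.
  all: try (by apply: eq_in_all => k; rewrite inI8 => hk; rewrite coordE inordK).
  all: try (congr (_ == _); apply: eq_in_foldr_mul => k; rewrite inI8 => hk;
  by rewrite coordE inordK).
Qed.

Lemma canonE (x : vec) : is_canon x = canonc (lst x).
Proof.
rewrite /is_canon allI8; apply: eq_in_all => k; rewrite inI8 => hk.
rewrite allI8 !coordE !inordK //; congr (_ && _ ==> _); apply: eq_in_all => k'; rewrite inI8 => hk'.
by rewrite coordE !inordK.
Qed.


Lemma mem_gen n l : (l \in gen n) = (size l == n) && all (fun c => (c < 3)%N) l.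
Proof.
have mc (c c' : nat) (l' : seq nat) (s : seq (seq nat)) : (c :: l' \in map (cons c') s) = (c == c') && (l' \in s).
  apply/mapP/andP => [[l'' hl'' [-> ->]]|[/eqP -> hl]]; [by rewrite eqxx | by exists l'].
have mc0 (c' : nat) (s : seq (seq nat)) : ([::] \in map (cons c') s) = false.
  by apply/mapP => -[].
elim: n l => [|n IH] [|c l] //=.
- by rewrite !mem_cat !mc0.
- rewrite !mem_cat in_nil orbF; apply/idP/idP.
  + by case/or3P => /mapP [l' hl' [-> ->]]; move: hl'; rewrite IH => /andP [/eqP -> ->]; rewrite eqxx.
  + case/and3P => /eqP [hs] hc ha; have hl : l \in gen n by rewrite IH hs eqxx.
    by case: c hc => [|[|[|c]]] // _; rewrite ?map_f ?orbT.
Qed.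

Lemma vert_Rl (v : vertex) : lst (val v) \in Rl.
Proof.
case: v => x /= /andP [hr hc].
rewrite mem_filter -rootE -canonE hr hc mem_gen size_lst eqxx !andTb.
by apply/allP => c /mapP [i _ ->]; rewrite ltn_ord.
Qed.

Definition mkv (l : seq nat) : vec := [ffun i : 'I_8 => inord (nth 0%N l i)].
Lemma lst_mkv l : l \in gen 8 -> lst (mkv l) = l.
Proof.
rewrite mem_gen => /andP [/eqP hs ha].
apply: (@eq_from_nth _ 0%N); rewrite ?size_lst ?hs // => i hi.
have hi8 : (i < 8)%N by move: hi; rewrite ?size_lst ?hs.
have h3 : (nth 0%N l i < 3)%N by move/allP: ha; apply; apply: mem_nth; rewrite hs.
rewrite nth_lst // /mkv ffunE.
change (nat_of_ord (inord (nth 0%N l (@inord 7 i)) : 'I_3) = nth 0%N l i).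
by rewrite (inordK hi8) (inordK h3).
Qed.

Lemma Rl_vert l : l \in Rl -> exists v : vertex, lst (val v) = l.
Proof.
rewrite mem_filter => /andP [/andP [hr hc] hg].
have H : is_root (mkv l) && is_canon (mkv l) by rewrite rootE canonE lst_mkv // hr hc.
by exists (exist _ (mkv l) H); rewrite /= lst_mkv.
Qed.

Lemma Lrel_sc a b : Lrel a b -> exists m : Lelt, exists e : int, e * e = 1 /\ sc (Lfn (tri m) (fc a)) (fc b) e.
Proof.
case/existsP => m /orP [/eqP E|/eqP E]; exists m; [exists 1 | exists (-1)]; split.
- exact: mul1r.
- by move=> i hi; rewrite -LmxA // E mul1r.
- by rewrite mulrNN mul1r.
- by move=> i hi; rewrite -LmxA // E /fc mxE mulN1r.
Qed.

Definition toL (P : T) : Lelt := (inord P.1.1, inord P.1.2, inord P.2).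
Lemma tri_toL P : valid P -> tri (toL P) = P.
Proof.
by case: P => [[a b] c] /and3P [ha hb hc]; rewrite /tri /toL /= !inordK.
Qed.

Lemma sc_Lrel a b P e : valid P -> e * e = 1 -> sc (Lfn P (fc a)) (fc b) e -> Lrel a b.
Proof.
move=> vP he h; apply/existsP; exists (toL P).
have : (e ^+ 2 == 1) by rewrite expr2 he.
rewrite sqrf_eq1 => /orP [/eqP E|/eqP E]; apply/orP; [left|right]; apply/eqP/matrixP => i j;
  rewrite (ord1 j); have h' := h _ (ltn_ord i); rewrite -(tri_toL vP) -LmxA // E /fc inord_val in h';
  rewrite h'.
- by rewrite mul1r.
- by rewrite mulN1r mxE.
Qed.

Lemma Lfn_ext m a b : valid m -> (forall i, (i < 8)%N -> a i = b i) -> forall i, (i < 8)%N -> Lfn m a i = Lfn m b i.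
Proof. by move=> vm h i hi; rewrite /Lfn h ?pmn_lt. Qed.

Lemma walk0 a b : walkb 0 a b = (a == b).
Proof.
apply/existsP/eqP => [[p]|->]; first by rewrite tuple0 /= => /eqP.
by exists [tuple]; rewrite /= eqxx.
Qed.
Lemma walk1 a b : walkb 1 a b = adj a b.
Proof.
apply/existsP/idP => [[p]|h].
  by case/tupleP: p => x p; rewrite tuple0 /= andbT => /andP [h /eqP <-].
by exists [tuple b]; rewrite /= h eqxx.
Qed.
Lemma walk2 a b c : adj a c -> adj c b -> walkb 2 a b.
Proof. by move=> h1 h2; apply/existsP; exists [tuple c; b]; rewrite /= h1 h2 eqxx. Qed.

Lemma gdist_adj a b : a != b -> adj a b -> gdist a b = 1%N.
Proof.
move=> ne h.
have : (2 <= #|{: vertex}|)%N.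
  have := max_card (mem [:: a; b]).
  have -> : #|mem [:: a; b]| = 2%N by apply/card_uniqP; rewrite /= inE ne.
  by [].
rewrite /gdist; case: #|{: vertex}| => [|[|n]] // _.
by rewrite /= walk0 (negbTE ne) walk1 h.
Qed.

Lemma gdist_nadj a b c : a != b -> ~~ adj a b -> adj a c -> adj c b -> ~~ adj a a -> ~~ adj b b -> gdist a b = 2%N.
Proof.
move=> ne h h1 h2 naa nbb.
have nac : a != c by apply/eqP => E; move: naa; rewrite {2}E h1.
have nbc : c != b by apply/eqP => E; move: nbb; rewrite -{1}E h2.
have : (3 <= #|{: vertex}|)%N.
  have := max_card (mem [:: a; b; c]).
  have -> : #|mem [:: a; b; c]| = 3%N.
    by apply/card_uniqP; rewrite /= !inE !negb_or ne nac (eq_sym b c) nbc.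
  by [].
rewrite /gdist; case: #|{: vertex}| => [|[|[|n]]] // _.
by rewrite /= walk0 (negbTE ne) walk1 (negbTE h) (walk2 h1 h2).
Qed.


Lemma sc_sym a b e : e * e = 1 -> sc a b e -> sc b a e.
Proof. by move=> he h i hi; rewrite h // mulrA he mul1r. Qed.
Lemma sc_trans a b c e f : sc a b e -> sc b c f -> sc a c (e * f).
Proof. by move=> h1 h2 i hi; rewrite h1 // h2 // mulrA. Qed.

Lemma Lmx_sc m a b : (Lmx m *m a == b) || (Lmx m *m a == - b) ->
  exists e : int, e * e = 1 /\ sc (Lfn (tri m) (fc a)) (fc b) e.
Proof.
case/orP => [/eqP E|/eqP E]; [exists 1 | exists (-1)]; split.
- exact: mul1r.
- by move=> i hi; rewrite -LmxA // E mul1r.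
- by rewrite mulrNN mul1r.
- by move=> i hi; rewrite -LmxA // E /fc mxE mulN1r.
Qed.

Lemma eps_sq1 m n : valid m -> valid n -> eps m n * eps m n = 1.
Proof. exact: eps_sq. Qed.

Lemma Bc_pair K L a b P Q e f : valid P -> valid Q -> e * e = 1 -> f * f = 1 ->
  sc a (Lfn P K) e -> sc b (Lfn Q L) f -> (dotc a b == 0) = Bc K (Lfn (lmul P Q) L).
Proof.
move=> vP vQ he hf ha hb.
rewrite (dotc_scl _ ha) (dotc_scr _ hb) BL // (dotc_scr _ (LL L vP vQ)) /Bc.
by rewrite !eq0_sc // eps_sq.
Qed.

Lemma lmul_swap m a n b : lmul (lmul m a) (lmul n b) = lmul (lmul a b) (lmul m n).
Proof.
have E (p q r s : bool) : (p (+) q) (+) (r (+) s) = (q (+) s) (+) (p (+) r).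
  by case: p; case: q; case: r; case: s.
by rewrite /lmul /= /pmul !xb_ofb !zb_ofb; congr (_, _, _); congr ofb; apply: E.
Qed.

Definition fv (v : vertex) : nat -> int := fc (vecZ (val v)).
Lemma fv_vl v : forall i, (i < 8)%N -> fv v i = vl (lst (val v)) i.
Proof. move=> i hi; exact: fc_vecZ. Qed.

Lemma adjE a b : adj a b = Bc (fv a) (fv b).
Proof. by rewrite /adj dotZE. Qed.

Lemma K5E v : ~~ Bc (fv v) (fv v).
Proof.
rewrite /Bc (dotc_ext (fv_vl v) (fv_vl v)).
by move/allP: K5_ok => /(_ _ (vert_Rl v)).
Qed.

Lemma RP_mem (v : vertex) : (lst (val v), map (vl (lst (val v))) I8) \in RP.
Proof. by apply: map_f; exact: vert_Rl. Qed.

Lemma K6E a b : a != b -> ~~ adj a b -> exists c, adj a c && adj c b.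
Proof.
move=> ne na.
move/allP: K6_ok => /(_ _ (RP_mem a)) /allP /(_ _ (RP_mem b)).
cbv beta iota zeta delta [fst snd].
have -> : (lst (val a) == lst (val b)) = false.
  by apply/negbTE; apply: contra ne => /eqP /lst_inj E; apply/eqP/val_inj.
have -> : (dotl [seq vl (lst (val a)) i | i <- I8] [seq vl (lst (val b)) i | i <- I8] == 0) = false.
  by apply/negbTE; move: na; rewrite adjE /Bc (dotc_ext (fv_vl a) (fv_vl b)).
rewrite hasbE => /hasP [[cl cv]] /mapP [l hl [E1 E2]]; subst cl cv.
cbv beta iota zeta delta [fst snd] => /andP [h1 h2].
case: (Rl_vert hl) => c hc; exists c.
rewrite !adjE /Bc (dotc_ext (fv_vl a) (fv_vl c)) (dotc_ext (fv_vl c) (fv_vl b)) hc.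
by rewrite h1 h2.
Qed.

Lemma gdistE a b : a != b -> gdist a b = if adj a b then 1%N else 2%N.
Proof.
move=> ne; case: ifP => h; first exact: gdist_adj.
have [c /andP [h1 h2]] := K6E ne (negbT h).
apply: (gdist_nadj ne (negbT h) h1 h2); rewrite adjE; exact: K5E.
Qed.

Lemma comp_lin (x z xa za xb' zb' : bool) :
  (x && (xa (+) xb')) (+) (z && (za (+) zb')) = ((x && xa) (+) (z && za)) (+) ((x && xb') (+) (z && zb')).
Proof. by case: x; case: z; case: xa; case: za; case: xb'; case: zb'. Qed.
Lemma E6 (a b c d e f : bool) : ((a (+) b) (+) (c (+) d)) (+) (e (+) f) = ((a (+) c) (+) e) (+) ((b (+) d) (+) f).
Proof. by case: a; case: b; case: c; case: d; case: e; case: f. Qed.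
Lemma K3E c m n : lin c (lmul m n) = lin c m (+) lin c n.
Proof. by rewrite /lin /lmul /= /pmul !xb_ofb !zb_ofb !comp_lin E6. Qed.

Lemma lin_e0 c : lin c e0 = false.
Proof. by rewrite /lin /= !andbF. Qed.

Definition bxor (b b' : bool * bool * bool) : bool * bool * bool :=
  (b.1.1 (+) b'.1.1, b.1.2 (+) b'.1.2, b.2 (+) b'.2).
Lemma lab_mul a m n : lab a (lmul m n) = bxor (lab a m) (lab a n).
Proof. by rewrite /lab /bxor /= !K3E. Qed.
Lemma Hlin_xor h b b' : Hlin h (bxor b b') = Hlin h b (+) Hlin h b'.
Proof.
case: h => [[h1 h2] h3]; case: b => [[x1 x2] x3]; case: b' => [[y1 y2] y3]; rewrite /Hlin /bxor /=.
by case: h1; case: h2; case: h3; case: x1; case: x2; case: x3; case: y1; case: y2; case: y3.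
Qed.
Lemma idx_lt b : (idx b < 8)%N.
Proof. by case: b => [[[] []] []]. Qed.
Lemma in_B8 b : b \in B8.
Proof. by case: b => [[[] []] []]. Qed.

Lemma zip_mem_gen (A B : eqType) (s : seq A) (t : seq B) (x : A) (y0 : B) :
  size s = size t -> x \in s -> exists y, (x, y) \in zip s t.
Proof.
move=> hst hx; exists (nth y0 t (index x s)).
have hi : (index x s < size s)%N by rewrite index_mem.
rewrite -{1}(nth_index x hx) -nth_zip //.
by apply: mem_nth; rewrite size_zip hst minnn -hst.
Qed.

Lemma zip_mem (l : seq nat) : l \in Rl -> exists d, (l, d) \in zip Rl Dat.
Proof.
move=> hl; case/andP: sizes => /eqP s1 /eqP s2.
have hst : size Rl = size Dat by rewrite s1 s2.
exact: (zip_mem_gen (e0, e0, e0, [::]) hst hl).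
Qed.

Lemma nth_ds (ka : seq int) (L : nat -> int) (rs : seq T) i : (i < size rs)%N ->
  nth false [seq dotl ka u == 0 | u <- [seq [seq Lfn r L j | j <- I8] | r <- rs]] i =
  (dotl ka (map (Lfn (nth e0 rs i) L) I8) == 0).
Proof. by move=> hi; rewrite (nth_map [::]) ?size_map // (nth_map e0). Qed.

Lemma map_eqI8 (f g : nat -> int) : map f I8 = map g I8 -> forall i, (i < 8)%N -> f i = g i.
Proof. by move/eq_in_map => h i hi; apply: h; rewrite inI8. Qed.

Lemma map_eqI8N (f g : nat -> int) : map f I8 = negl (map g I8) -> forall i, (i < 8)%N -> f i = - g i.
Proof. by rewrite /negl -map_comp => /map_eqI8 h i hi; rewrite h. Qed.

Lemma same_sym a b : same_orbit a b -> same_orbit b a.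
Proof.
case/Lrel_sc => m [e [he h]].
have vm := valid_tri m.
have h1 := sc_sym (sq1M (eps_sq vm vm) he) (Linv vm h).
exact: (sc_Lrel vm (sq1M (eps_sq vm vm) he) h1).
Qed.

Lemma Bc_e0 a b : Bc a (Lfn e0 b) = Bc a b.
Proof. by rewrite /Bc (@dotc_ext a a (Lfn e0 b) b) // => i hi; rewrite Lfn_e0. Qed.

Lemma K4E (a b : vertex) : ~~ same_orbit a b -> forall C D, valid C -> valid D ->
  let G P := Bc (fv a) (Lfn P (fv b)) (+) Bc (fv a) (fv b) in G (lmul C D) = G C (+) G D.
Proof.
move=> nso C D vC vD G.
set Ka := vl (lst (val a)); set Lb := vl (lst (val b)).
have GE P : valid P -> G P = Bc Ka (Lfn P Lb) (+) Bc Ka Lb.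
  move=> vP; rewrite /G /Bc (dotc_ext (fv_vl a) (fv_vl b)).
  by rewrite (dotc_ext (fv_vl a) (Lfn_ext vP (fv_vl b))).
rewrite !GE ?valid_lmul //.
have [[av rs] hd] := zip_mem (vert_Rl b).
move/allP: K4a_ok => /(_ _ hd).
cbv beta iota zeta delta [fst snd].
case/and3P => /eqP hs /allP hv /allP hP.
move/allP: K4b_ok => /(_ _ hd).
cbv beta iota zeta delta [fst snd].
move=> /allP /(_ _ (RP_mem a)).
cbv beta iota zeta delta [fst snd].
set dd := fun b' => Bc Ka (Lfn (nth e0 rs (idx b')) Lb).
have vr b' : valid (nth e0 rs (idx b')).
  by apply: hv; apply: mem_nth; rewrite hs idx_lt.
have D1 b' : nth false [seq dotl [seq vl (lst (val a)) i | i <- I8] u == 0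
       | u <- [seq [seq Lfn r (vl (lst (val b))) i | i <- I8] | r <- rs]] (idx b') = dd b'.
  have hi : (idx b' < size rs)%N by rewrite hs idx_lt.
  rewrite (nth_ds _ _ hi); reflexivity.
case: ifP => [Hall _|_]; last first.
  case/hasP => u /mapP [r hr ->] /orP [] /eqP E; case/negP: nso; apply: same_sym.
  - have vr' : valid r by apply: hv.
    apply: (@sc_Lrel _ _ r 1 vr' (mul1r 1)) => i hi.
    rewrite mul1r (Lfn_ext vr' (fun j hj => fc_vecZ (val b) hj) hi) (fc_vecZ (val a) hi).
    symmetry; exact: (map_eqI8 E hi).
  - have vr' : valid r by apply: hv.
    have hm : (-1 : int) * -1 = 1 by rewrite mulrNN mul1r.
    apply: (@sc_Lrel _ _ r (-1) vr' hm) => i hi.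
    rewrite (Lfn_ext vr' (fun j hj => fc_vecZ (val b) hj) hi) (fc_vecZ (val a) hi).
    rewrite (map_eqI8N E hi) mulN1r opprK; reflexivity.
pose h := (dd (true, false, false) (+) dd (false, false, false),
           dd (false, true, false) (+) dd (false, false, false),
           dd (false, false, true) (+) dd (false, false, false)).
have H4 b' : dd b' (+) dd (false, false, false) = Hlin h b'.
  move/allP: Hall => /(_ b' (in_B8 b')); cbv beta; rewrite !D1 => /eqP ->; reflexivity.
have C2 P : valid P -> Bc Ka (Lfn P Lb) = dd (lab av P).
  move=> vP; have := hP P; rewrite mem_T64 => /(_ vP) /orP [] /eqP E.
  - rewrite /dd /Bc (@dotc_ext Ka Ka (Lfn P Lb) (Lfn (nth e0 rs (idx (lab av P))) Lb) (fun i _ => erefl) (map_eqI8 E)).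
    by [].
  - have hm : (-1 : int) * -1 = 1 by rewrite mulrNN mul1r.
    have sc1 : sc (Lfn P Lb) (Lfn (nth e0 rs (idx (lab av P))) Lb) (-1).
      by move=> i hi; rewrite (map_eqI8N E hi) mulN1r.
    by rewrite /dd /Bc (dotc_scr _ sc1) eq0_sc.
have G' P : valid P -> Bc Ka (Lfn P Lb) (+) Bc Ka Lb = Hlin h (lab av P).
  move=> vP; rewrite (C2 P vP) -(Bc_e0 Ka Lb) (C2 e0 valid_e0).
  have -> : lab av e0 = (false, false, false) by rewrite /lab !lin_e0.
  exact: H4.
by rewrite (G' _ (valid_lmul C D)) (G' _ vC) (G' _ vD) lab_mul Hlin_xor.
Qed.

Lemma same_refl v : same_orbit v v.
Proof.
apply: (@sc_Lrel _ _ e0 1 valid_e0 (mul1r 1)) => i hi; rewrite Lfn_e0 // mul1r //.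
Qed.

Lemma sc_e0 a : sc a (Lfn e0 a) 1.
Proof. by move=> i hi; rewrite Lfn_e0 // mul1r. Qed.



Lemma fin (P Q : Prop) (p q : bool) : reflect P p -> reflect Q q -> p = q -> (P <-> Q).
Proof.
move=> hP hQ E; split.
  by move/hP; rewrite E => /hQ.
by move/hQ; rewrite -E => /hP.
Qed.
Lemma finN (P Q : Prop) (p q : bool) : reflect P p -> reflect Q q -> p = ~~ q -> (P <-> ~ Q).
Proof.
move=> hP hQ E; split => [/hP|hnq].
  by rewrite E => /negP hq /hQ.
by apply/hP; rewrite E; apply/negP => /hQ.
Qed.

Unset Implicit Arguments.
Theorem lemma3p7
  (w : vertex -> vec) (Mch : vertex -> vertex -> Lelt)
  (hw_root : forall v : vertex, is_root (w v))
  (hw_orb : forall v : vertex, Lrel (vecZ (w v)) (vecZ (val v)))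
  (hw_const : forall v v' : vertex, same_orbit v v' -> w v = w v')
  (hM : forall y z : vertex, same_orbit y z ->
     (Lmx (Mch y z) *m vecZ (val y) == vecZ (val z)) ||
     (Lmx (Mch y z) *m vecZ (val y) == - vecZ (val z)))
  (k s l t : vertex)
  (hks : same_orbit k s) (hlt : same_orbit l t) (hij : ~~ same_orbit k l) :
  (gdist k l = gdist s t ->
     (uent w Mch k s *m uent w Mch l t = 0 <-> dotZ (vecZ (w k)) (vecZ (w l)) = 0)) /\
  (gdist k l <> gdist s t ->
     (uent w Mch k s *m uent w Mch l t = 0 <-> dotZ (vecZ (w k)) (vecZ (w l)) <> 0)).
Proof.
have [mA [eA [hA sA]]] := Lrel_sc (hw_orb k).
have [mB [eB [hB sB]]] := Lrel_sc (hw_orb l).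
have [eM [hM' sM]] := Lmx_sc (hM _ _ hks).
have [eN [hN' sN]] := Lmx_sc (hM _ _ hlt).
have U : dotZ (Lmx (Mch k s) *m vecZ (w k)) (Lmx (Mch k s) *m vecZ (w k)) != 0 ->
         dotZ (Lmx (Mch l t) *m vecZ (w l)) (Lmx (Mch l t) *m vecZ (w l)) != 0 ->
   (uent w Mch k s *m uent w Mch l t == 0) =
   (dotZ (Lmx (Mch k s) *m vecZ (w k)) (Lmx (Mch l t) *m vecZ (w l)) == 0).
  exact: Proj0.
have sX : sc (fc (Lmx (Mch k s) *m vecZ (w k))) (Lfn (tri (Mch k s)) (fc (vecZ (w k)))) 1.
  by move=> i hi; rewrite LmxA // mul1r.
have sY : sc (fc (Lmx (Mch l t) *m vecZ (w l))) (Lfn (tri (Mch l t)) (fc (vecZ (w l)))) 1.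
  by move=> i hi; rewrite LmxA // mul1r.
rewrite !dotZE in U *.
move: U sX sY.
move: (fc (Lmx (Mch k s) *m vecZ (w k))) (fc (Lmx (Mch l t) *m vecZ (w l))) => X Y U sX sY.
move: (valid_tri mA) (valid_tri mB) (valid_tri (Mch k s)) (valid_tri (Mch l t)) => vA vB vM vN.
move: sA sB sM sN sX sY.
move: (tri mA) (tri mB) (tri (Mch k s)) (tri (Mch l t)) vA vB vM vN => A B M N vA vB vM vN sA sB sM sN sX sY.
(* express everything relative to K = fv k and L = fv l *)
have sWK := Linv vA sA.
have sWL := Linv vB sB.
have sS := sc_sym hM' sM.
have sT := sc_sym hN' sN.
have qA : (eps A A * eA) * (eps A A * eA) = 1 by apply: sq1M; rewrite ?eps_sq.
have qB : (eps B B * eB) * (eps B B * eB) = 1 by apply: sq1M; rewrite ?eps_sq.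
have sX' : sc X (Lfn (lmul M A) (fv k)) (1 * ((eps A A * eA) * eps M A)).
  apply: (sc_trans sX); apply: sc_trans (Lfn_sc vM sWK) _; exact: LL.
have sY' : sc Y (Lfn (lmul N B) (fv l)) (1 * ((eps B B * eB) * eps N B)).
  apply: (sc_trans sY); apply: sc_trans (Lfn_sc vN sWL) _; exact: LL.
have qX : (1 * ((eps A A * eA) * eps M A)) * (1 * ((eps A A * eA) * eps M A)) = 1.
  by rewrite mul1r; apply: sq1M => //; rewrite eps_sq.
have qY : (1 * ((eps B B * eB) * eps N B)) * (1 * ((eps B B * eB) * eps N B)) = 1.
  by rewrite mul1r; apply: sq1M => //; rewrite eps_sq.
have vMA := valid_lmul M A; have vNB := valid_lmul N B.
have nx : dotc X X != 0.
  rewrite (Bc_pair vMA vMA qX qX sX' sX') lmulxx Bc_e0; exact: K5E.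
have ny : dotc Y Y != 0.
  rewrite (Bc_pair vNB vNB qY qY sY' sY') lmulxx Bc_e0; exact: K5E.
have {U nx ny} U := U nx ny.
have Ex : (dotc X Y == 0) = Bc (fv k) (Lfn (lmul (lmul A B) (lmul M N)) (fv l)).
  by rewrite (Bc_pair vMA vNB qX qY sX' sY') lmul_swap.
have Ew : (dotc (fc (vecZ (w k))) (fc (vecZ (w l))) == 0) = Bc (fv k) (Lfn (lmul A B) (fv l)).
  exact: (Bc_pair vA vB qA qB sWK sWL).
have Est : adj s t = Bc (fv k) (Lfn (lmul M N) (fv l)).
  by rewrite adjE {1}/Bc (Bc_pair vM vN hM' hN' sS sT).
have Ekl : adj k l = Bc (fv k) (fv l) by rewrite adjE.
have core : Bc (fv k) (Lfn (lmul (lmul A B) (lmul M N)) (fv l)) (+) Bc (fv k) (fv l) =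
   (Bc (fv k) (Lfn (lmul A B) (fv l)) (+) Bc (fv k) (fv l)) (+)
   (Bc (fv k) (Lfn (lmul M N) (fv l)) (+) Bc (fv k) (fv l)).
  exact: (K4E hij (valid_lmul A B) (valid_lmul M N)).
have nkl : k != l by apply/eqP => E; move: hij; rewrite E same_refl.
have nst : s != t.
  apply/eqP => E; move/negP: hij; apply.
  have h1 := Linv vN sN.
  rewrite -E in h1.
  have h2 := sc_trans h1 (sc_trans (Lfn_sc vN sS) (LL (fv k) vN vM)).
  have q : (eps N N * eN * (eM * eps N M)) * (eps N N * eN * (eM * eps N M)) = 1.
    by apply: sq1M; apply: sq1M => //; rewrite eps_sq.
  exact: (sc_Lrel (valid_lmul N M) q (sc_sym q h2)).
rewrite (gdistE nkl) (gdistE nst) Est Ekl.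
split => Hd; [apply: (fin eqP eqP)|apply: (finN eqP eqP)]; rewrite U Ex Ew; move: Hd core;
  case: (Bc (fv k) (Lfn (lmul (lmul A B) (lmul M N)) (fv l)));
  case: (Bc (fv k) (Lfn (lmul A B) (fv l)));
  case: (Bc (fv k) (Lfn (lmul M N) (fv l)));
  case: (Bc (fv k) (fv l)) => //.
Qed.
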